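(* $\chi_D(LG_3)\le 5$.
   Context: Let $V=\mathbb{F}_3^3$; $LG_3$ is the bipartite graph whose vertices are the $1$-dimensional subspaces (''points'') and the $2$-dimensional subspaces (''lines'') of $V$, a point being adjacent to a line iff it is contained in it. A coloring is distinguishing if the only graph automorphism mapping every color class onto itself is the identity; $\chi_D(G)$ is the minimum number of colors of a proper distinguishing coloring of $G$. *)

(* Defs.v *)
From HB Require Import structures.
From mathcomp Require Import all_boot all_order all_algebra all_fingroup.
Set Implicit Arguments. Unset Strict Implicit. Unset Printing Implicit Defensive.
Import GRing.Theory.

(* V = F_3^3, vectors are row vectors 'rV['F_3]_3.  A subspace of V is
   represented canonically by the square matrix <<A>>%MS (mxalgebra's
   canonical representative of a row space): two 3x3 matrices in canonical
   form are equal iff their row spaces are equal. *)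
Definition F3 := 'F_3.

Definition is_subspace_rep (A : 'M[F3]_3) : bool := (<<A>>%MS == A).

Definition is_point (A : 'M[F3]_3) : bool := is_subspace_rep A && (\rank A == 1)%N.
Definition is_line  (A : 'M[F3]_3) : bool := is_subspace_rep A && (\rank A == 2)%N.

Definition is_vertex (A : 'M[F3]_3) : bool := is_point A || is_line A.

Definition LG3_vertex : predArgType := {A : 'M[F3]_3 | is_vertex A}.
HB.instance Definition _ := [isSub for (@sval _ is_vertex : LG3_vertex -> 'M[F3]_3)].
HB.instance Definition _ := [Finite of LG3_vertex by <:].

Definition LG3_adj (x y : LG3_vertex) : bool :=
  (is_point (val x) && is_line (val y) && (val x <= val y)%MS) ||
  (is_point (val y) && is_line (val x) && (val y <= val x)%MS).

Definition LG3_aut (f : {perm LG3_vertex}) : Prop :=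
  forall x y, LG3_adj (f x) (f y) = LG3_adj x y.

Definition proper_coloring (k : nat) (c : LG3_vertex -> 'I_k) : Prop :=
  forall x y, LG3_adj x y -> c x != c y.

Definition distinguishing (k : nat) (c : LG3_vertex -> 'I_k) : Prop :=
  forall f : {perm LG3_vertex}, LG3_aut f -> (forall x, c (f x) = c x) -> f = 1%g.

Definition chiD_le (k : nat) : Prop :=
  exists c : LG3_vertex -> 'I_k, proper_coloring c /\ distinguishing c.

(* Main.v *)
Require Import Defs.
From mathcomp Require Import all_boot all_order all_algebra all_fingroup.
Import GRing.Theory.
Set Implicit Arguments. Unset Strict Implicit.

Definition L : seq (nat * nat * nat) :=
  [:: (0,0,1); (0,1,0); (0,1,1); (0,1,2); (1,0,0); (1,0,1); (1,0,2);
      (1,1,0); (1,1,1); (1,1,2); (1,2,0); (1,2,1); (1,2,2)]%N.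
Definition tri (s : nat) : nat * nat * nat :=
  nth (0,0,1)%N L (if s < 13 then s else s - 13).
Definition dotN (u w : nat * nat * nat) : nat :=
  u.1.1 * w.1.1 + u.1.2 * w.1.2 + u.2 * w.2.
Definition adjN (s t : nat) : bool :=
  ((s < 13) != (t < 13)) && (dotN (tri s) (tri t) %% 3 == 0).
Definition colN : seq nat :=
  [:: 4;3;4;3;4;4;1;3;4;2;3;4;0;2;2;1;3;1;4;1;1;2;1;1;2;1]%N.
Definition ordN : seq nat :=
  [:: 12; 16; 18; 1; 6; 9; 13; 3; 4; 14; 11; 15; 17; 0; 2; 5; 8; 19; 20; 7; 10; 21; 22; 23; 24; 25]%N.
Definition colv s := nth 0 colN s.
Definition I26 := iota 0 26.

Lemma check_prop : all (fun i => let t := nth 0 ordN i in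
  all (fun z => ~~ ((colv z == colv t) && all (fun s => adjN s z == adjN s t) (take i ordN)) || (z == t)) I26)
  (iota 0 26).
Proof. by vm_compute. Qed.
Lemma check_cover : all (fun t => t \in ordN) I26.
Proof. by vm_compute. Qed.
Lemma check_sep : all (fun s => all (fun t => (s == t) || has (fun u => adjN s u != adjN t u) I26) I26) I26.
Proof. by vm_compute. Qed.
Lemma check_proper : all (fun s => all (fun t => adjN s t ==> (colv s != colv t)) I26) I26.
Proof. by vm_compute. Qed.
Lemma check_col : all (fun s => colv s < 5) I26.
Proof. by vm_compute. Qed.
Lemma check_nz : all (fun u : nat * nat * nat => ~~ [&& 3 %| u.1.1, 3 %| u.1.2 & 3 %| u.2]) ((0,0,1) :: L).
Proof. by vm_compute. Qed.
Lemma check_cov : all (fun a => all (fun b => all (fun c =>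
   ((a,b,c) == (0,0,0)) || has (fun j => has (fun k =>
      [&& (k * (tri j).1.1) %% 3 == a, (k * (tri j).1.2) %% 3 == b & (k * (tri j).2) %% 3 == c]) [:: 1; 2]) (iota 0 13))
   (iota 0 3)) (iota 0 3)) (iota 0 3).
Proof. by vm_compute. Qed.
Local Open Scope ring_scope.

Definition vec3 (u : nat * nat * nat) : 'rV[F3]_3 :=
  \row_(i < 3) (nth 0%N [:: u.1.1; u.1.2; u.2] i)%:R.

Lemma pr3 : prime 3. Proof. by []. Qed.
Lemma F3_eq0 n : ((n%:R : F3) == 0) = (n %% 3 == 0)%N.
Proof. by rewrite -(dvdn_pcharf (pchar_Fp pr3)) /dvdn. Qed.

Lemma vec_dot u w : (vec3 u *m (vec3 w)^T) 0 0 = (dotN u w)%:R.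
Proof.
rewrite !mxE !big_ord_recr big_ord0 /= !mxE /= add0r /dotN !natrD !natrM.
by [].
Qed.

Lemma mx11_eq0 (A : 'M[F3]_1) : (A == 0) = (A 0 0 == 0).
Proof.
apply/eqP/eqP => [->|h]; first by rewrite mxE.
by apply/matrixP => i j; rewrite !ord1 h mxE.
Qed.

Lemma vec_orth u w : (vec3 u *m (vec3 w)^T == 0) = (dotN u w %% 3 == 0)%N.
Proof. by rewrite mx11_eq0 vec_dot F3_eq0. Qed.

Lemma vec3_nz u : ~~ [&& 3 %| u.1.1, 3 %| u.1.2 & 3 %| u.2]%N -> vec3 u != 0.
Proof.
apply: contra => /eqP h.
have e (k : 'I_3) : ((nth 0%N [:: u.1.1; u.1.2; u.2] k)%:R : F3) = 0.
  by have := congr1 (fun M : 'rV[F3]_3 => M 0 k) h; rewrite !mxE.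
have := e (@Ordinal 3 0 isT); have := e (@Ordinal 3 1 isT); have := e (@Ordinal 3 2 isT).
move=> /eqP; rewrite F3_eq0 => h2 /eqP; rewrite F3_eq0 => h1 /eqP; rewrite F3_eq0 => h0.
by rewrite /dvdn h0 h1 h2.
Qed.

Definition Mpt u : 'M[F3]_3 := <<vec3 u>>%MS.
Definition Mln u : 'M[F3]_3 := <<kermx (vec3 u)^T>>%MS.

Lemma rank_Mpt u : vec3 u != 0 -> \rank (Mpt u) = 1%N.
Proof. by move=> h; rewrite /Mpt genmxE rank_rV h. Qed.
Lemma rank_Mln u : vec3 u != 0 -> \rank (Mln u) = 2%N.
Proof. by move=> h; rewrite /Mln genmxE mxrank_ker mxrank_tr rank_rV h. Qed.

Lemma tri_nz s : vec3 (tri s) != 0.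
Proof.
apply: vec3_nz.
have : tri s \in (0,0,1)%N :: L.
  rewrite /tri; set n := (if _ then _ else _).
  case: (ltnP n (size L)) => hn; first by rewrite inE mem_nth ?orbT.
  by rewrite nth_default // inE eqxx.
by move/(allP check_nz).
Qed.

Definition Msem s := if (s < 13)%N then Mpt (tri s) else Mln (tri s).

Lemma pt_point u : vec3 u != 0 -> is_point (Mpt u) && ~~ is_line (Mpt u).
Proof. by move=> h; rewrite /is_point /is_line /is_subspace_rep /Mpt genmx_id eqxx -/(Mpt u) rank_Mpt. Qed.
Lemma ln_line u : vec3 u != 0 -> is_line (Mln u) && ~~ is_point (Mln u).
Proof. by move=> h; rewrite /is_point /is_line /is_subspace_rep /Mln genmx_id eqxx -/(Mln u) rank_Mln. Qed.

Lemma Msem_vertex s : is_vertex (Msem s).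
Proof.
rewrite /is_vertex /Msem; case: ifP => _.
  by case/andP: (pt_point (tri_nz s)) => ->.
by case/andP: (ln_line (tri_nz s)) => ->; rewrite orbT.
Qed.

Definition g0 s : LG3_vertex := Sub (Msem s) (Msem_vertex s).

Lemma pt_ln_sub u w : (Mpt u <= Mln w)%MS = (dotN u w %% 3 == 0)%N.
Proof. by rewrite /Mpt /Mln !genmxE sub_kermx vec_orth. Qed.

Lemma dotNC u w : dotN u w = dotN w u.
Proof. by rewrite /dotN !(mulnC u.1.1) !(mulnC u.1.2) (mulnC u.2). Qed.

Lemma g0_adj s t : LG3_adj (g0 s) (g0 t) = adjN s t.
Proof.
rewrite /LG3_adj /adjN /g0 !SubK /Msem.
have [ps ls] := andP (pt_point (tri_nz s)).
have [pt lt] := andP (pt_point (tri_nz t)).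
have [ls' ps'] := andP (ln_line (tri_nz s)).
have [lt' pt'] := andP (ln_line (tri_nz t)).
case: (ltnP s 13) => hs; case: (ltnP t 13) => ht /=.
- by rewrite (negbTE ls) (negbTE lt) !andbF.
- by rewrite ps lt' pt_ln_sub (negbTE pt') /= orbF.
- by rewrite pt ls' pt_ln_sub (negbTE ps') /= dotNC.
- by rewrite (negbTE ps') (negbTE pt').
Qed.

Lemma F3_natr (x : F3) : (val x)%:R = x.
Proof. exact: (@natr_Zp 1 x). Qed.
Lemma F3_lt (x : F3) : (val x < 3)%N.
Proof. by case: x. Qed.

Lemma vec3_val (v : 'rV[F3]_3) : v = vec3 (val (v 0 0), val (v 0 1), val (v 0 2)).
Proof.
apply/rowP => i; rewrite mxE.
by case: i => [[|[|[|//]]] Hi] /=; rewrite F3_natr; congr (v _ _); apply: val_inj.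
Qed.

Lemma vec3_0 : vec3 (0,0,0)%N = 0.
Proof. by apply/rowP => i; rewrite !mxE; case: i => [[|[|[|//]]] Hi]. Qed.

Lemma cov (v : 'rV[F3]_3) : v != 0 ->
  exists j, (j < 13)%N /\ exists2 k : F3, k != 0 & v = k *: vec3 (tri j).
Proof.
move=> vnz.
have ha := F3_lt (v 0 0); have hb := F3_lt (v 0 1); have hc := F3_lt (v 0 2).
move: vnz; rewrite [v]vec3_val.
move: (val (v 0 0)) (val (v 0 1)) (val (v 0 2)) ha hb hc => a b c ha hb hc vnz.
have := allP check_cov a; rewrite mem_iota ha => /(_ isT) /allP /(_ b).
rewrite mem_iota hb => /(_ isT) /allP /(_ c); rewrite mem_iota hc => /(_ isT).
case/orP => [/eqP e|].
  by move: vnz; rewrite e vec3_0 eqxx.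
case/hasP => j; rewrite mem_iota add0n => hj /hasP [k hk /and3P [e1 e2 e3]].
exists j; split => //; exists k%:R.
  by rewrite F3_eq0; move: hk; rewrite !inE => /orP [] /eqP ->.
apply/rowP => i; rewrite !mxE.
case: i => [[|[|[|//]]] Hi] /=; rewrite -natrM -[in RHS](Fp_nat_mod pr3).
- by rewrite (eqP e1).
- by rewrite (eqP e2).
- by rewrite (eqP e3).
Qed.

Lemma nz_row (A : 'M[F3]_3) : A != 0 -> exists i, row i A != 0.
Proof.
move=> Anz; case: (pickP (fun i => row i A != 0)) => [i hi|h]; first by exists i.
case/eqP: Anz; apply/row_matrixP => i; rewrite row0.
by have := h i => /negbFE /eqP.
Qed.

Lemma surj (y : LG3_vertex) : exists s, (s < 26)%N && (g0 s == y).
Proof.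
case: y => A hA.
case/orP: (hA) => /andP [/eqP cA /eqP rA].
- have Anz : A != 0 by rewrite -mxrank_eq0 rA.
  have [i vi] := nz_row Anz.
  have sv : (row i A <= A)%MS := row_sub i A.
  have evA : (row i A == A)%MS by rewrite -(mxrank_leqif_eq sv).2 rank_rV vi rA.
  have [j [hj [k kz ek]]] := cov vi.
  exists j; rewrite (ltn_trans hj) //=; apply/eqP/val_inj => /=.
  rewrite /Msem hj /Mpt -cA -(eq_genmx (eqmx_scale _ kz)) -ek.
  exact/genmxP.
- set K := kermx A^T.
  have rK : \rank K = 1%N by rewrite mxrank_ker mxrank_tr rA.
  have Knz : K != 0 by rewrite -mxrank_eq0 rK.
  have [i ni] := nz_row Knz.
  have h1 : row i K *m A^T = 0 by apply/eqP; rewrite -sub_kermx row_sub.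
  have h2 : A *m (row i K)^T = 0.
    by have := congr1 trmx h1; rewrite trmx_mul trmxK trmx0.
  have [j [hj [k kz ek]]] := cov ni.
  have h3 : A *m (vec3 (tri j))^T = 0.
    move: h2; rewrite ek linearZ /= -scalemxAr => /eqP.
    by rewrite scaler_eq0 (negbTE kz) => /eqP.
  have sA : (A <= kermx (vec3 (tri j))^T)%MS by rewrite sub_kermx h3.
  have eA : (A == kermx (vec3 (tri j))^T)%MS.
    by rewrite -(mxrank_leqif_eq sA).2 mxrank_ker mxrank_tr rank_rV tri_nz rA.
  have hj2 : (13 + j < 26)%N by rewrite -[26%N]/(13 + 13)%N ltn_add2l.
  exists (13 + j)%N; rewrite hj2 /=. apply/eqP. apply: val_inj.
  have tj : tri (13 + j) = tri j.
    by rewrite /tri ltnNge leq_addr /= addKn hj.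
  rewrite /= /Msem ltnNge leq_addr /= tj /Mln -cA.
  by apply/esym/genmxP.
Qed.
Local Close Scope ring_scope.

Definition hv (y : LG3_vertex) : nat := xchoose (surj y).
Lemma hvP y : (hv y < 26) && (g0 (hv y) == y).
Proof. exact: (xchooseP (surj y)). Qed.
Lemma hv_lt y : hv y < 26. Proof. by case/andP: (hvP y). Qed.
Lemma hvK y : g0 (hv y) = y. Proof. by case/andP: (hvP y) => _ /eqP. Qed.

Lemma inI26 s : (s \in I26) = (s < 26). Proof. by rewrite mem_iota. Qed.

Lemma g0_inj s t : s < 26 -> t < 26 -> g0 s = g0 t -> s = t.
Proof.
move=> hs ht e.
have := allP check_sep s; rewrite inI26 hs => /(_ isT) /allP /(_ t).
rewrite inI26 ht => /(_ isT) /orP [/eqP //|/hasP [u _]].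
by rewrite -!g0_adj e eqxx.
Qed.

Lemma hK t : t < 26 -> hv (g0 t) = t.
Proof. by move=> ht; apply: g0_inj => //; [exact: hv_lt | rewrite hvK]. Qed.

Definition cc (y : LG3_vertex) : 'I_5 := inord (colv (hv y)).

Lemma col_lt t : t < 26 -> colv t < 5.
Proof. by move=> ht; apply: (allP check_col); rewrite inI26. Qed.

Lemma cc_g0 t : t < 26 -> val (cc (g0 t)) = colv t.
Proof. by move=> ht; rewrite /cc hK //; apply: inordK; apply: col_lt. Qed.

Lemma cc_val y : val (cc y) = colv (hv y).
Proof. by rewrite -{1}(hvK y) cc_g0 // hv_lt. Qed.

Theorem mainTheorem16 : chiD_le 5.
Proof.
exists cc; split.
  move=> x y a; rewrite -val_eqE !cc_val.
  move: a; rewrite -{1}(hvK x) -{1}(hvK y) g0_adj => a.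
  have := allP check_proper (hv x); rewrite inI26 hv_lt => /(_ isT) /allP /(_ (hv y)).
  by rewrite inI26 hv_lt => /(_ isT) /implyP /(_ a).
move=> f af cf.
have key : forall i, i <= 26 -> forall s, s \in take i ordN -> f (g0 s) = g0 s.
  elim => [|i IH] hi s; first by [].
  have hi' : i < size ordN by [].
  rewrite (take_nth 0 hi') mem_rcons inE => /orP [/eqP ->|]; last first.
    by apply: IH; apply: ltnW.
  set t := nth 0 ordN i.
  set z := hv (f (g0 t)).
  have ez : g0 z = f (g0 t) by rewrite hvK.
  have := allP check_prop i; rewrite mem_iota hi' => /(_ isT).
  move=> /allP /(_ z).
  rewrite inI26 hv_lt => /(_ isT) /orP [|/eqP ezt]; last by rewrite -ez ezt.
  case/negP; apply/andP; split.
    have ht : t < 26.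
      have : all (fun t => t < 26) ordN by [].
      by move/allP; apply; rewrite /t mem_nth.
    have := congr1 val (cf (g0 t)); rewrite cc_val cc_g0 // => ->.
    by rewrite eqxx.
  apply/allP => u hu.
  by rewrite -!g0_adj ez -{1}(IH (ltnW hi) u hu) af.
apply/permP => y; rewrite perm1 -(hvK y).
apply: (key 26 (leqnn _)); rewrite take_oversize //.
by apply: (allP check_cover); rewrite inI26 hv_lt.
Qed.
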